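(* Let $\kappa$ be any cardinal. The functors $N:\mathbf{MKF}_\kappa\to\mathbf{NFR}_\kappa$ and $H:\mathbf{NFR}_\kappa\to\mathbf{MKF}_\kappa$ form an equivalence of categories: for every $\kappa$-downward directed multi-relational Kripke frame $M=\langle W,S\rangle$, the identity map on $W$ is an isomorphism of multi-relational Kripke frames $M\to H(N(M))$, and for every $\kappa$-complete neighborhood frame $Z=\langle C,\nu\rangle$, the identity map on $C$ is an isomorphism of neighborhood frames $Z\to N(H(Z))$ (these identities being natural).
   Context: For a binary relation $R$ on $W$ and $x\in W$, $R[x]=\{y\in W\mid xRy\}$. A multi-relational Kripke frame is a pair $\langle W,S\rangle$ where $W$ is a non-empty set and $S$ is a non-empty set of binary relations on $W$. For a cardinal $\kappa$, it is $\kappa$-downward directed if for every $S'\subseteq S$ with $|S'|<\kappa$ there is $R\in S$ with $R\subseteq\bigcap S'$ (with $\bigcap\emptyset=W\times W$). A homomorphism of multi-relational Kripke frames $f:\langle W_1,S_1\rangle\to\langle W_2,S_2\rangle$ is a map $f:W_1\to W_2$ such that: (i) for every $x\in W_1$ and $R_2\in S_2$ there is $R_1\in S_1$ such that for all $y\in W_1$, $xR_1y$ implies $f(x)R_2f(y)$; (ii) for every $x\in W_1$ and $R_1\in S_1$ there is $R_2\in S_2$ such that for all $u\in W_2$, if $f(x)R_2u$ then there exists $y\in W_1$ with $xR_1y$ and $f(y)=u$. An isomorphism is a bijective homomorphism. $\mathbf{MKF}_\kappa$ is the category of $\kappa$-downward directed multi-relational Kripke frames with these homomorphisms. A neighborhood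 frame is a pair $\langle C,\nu\rangle$ with $C$ non-empty and $\nu:C\to\mathcal P(\mathcal P(C))$. It is $\kappa$-complete if $C\in\nu(c)$ for all $c$, $\nu(c)$ is upward closed under $\subseteq$ for all $c$, and $\bigcap S'\in\nu(c)$ for every $c\in C$ and every non-empty $S'\subseteq\nu(c)$ with $|S'|<\kappa$. A homomorphism of neighborhood frames $f:\langle C_1,\nu_1\rangle\to\langle C_2,\nu_2\rangle$ is a map $f:C_1\to C_2$ such that for all $c\in C_1$, $X\subseteq C_2$: $f^{-1}[X]\in\nu_1(c)\iff X\in\nu_2(f(c))$. $\mathbf{NFR}_\kappa$ is the category of $\kappa$-complete neighborhood frames with these homomorphisms. $N(\langle W,S\rangle)=\langle W,\nu_M\rangle$ with $\nu_M(x)=\{Y\subseteq W\mid R[x]\subseteq Y\text{ for some }R\in S\}$, and $N(f)=f$. $H(\langle C,\nu\rangle)=\langle C,\{R_v\mid v\in V_Z\}\rangle$ where $V_Z$ is the set of maps $v:C\to\mathcal P(C)$ with $v(x)\in\nu(x)$ for all $x$ and $R_v=\{(x,y)\mid y\in v(x)\}$; $H(f)=f$. *)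

(* Defs.v *)
(* A cardinal kappa is represented by a type K of cardinality kappa.
   |A| < |K|  :=  there is an injection A -> K but no injection K -> A. *)
Definition injective_fun {A B : Type} (f : A -> B) : Prop :=
  forall a b, f a = f b -> a = b.

Definition card_lt (A K : Type) : Prop :=
  (exists f : A -> K, injective_fun f) /\ ~ (exists g : K -> A, injective_fun g).

Definition bij {A B : Type} (f : A -> B) : Prop :=
  injective_fun f /\ forall b, exists a, f a = b.

Definition Rel (W : Type) := W -> W -> Prop.

(* kappa-downward directed: for every S' subset of S with |S'| < kappa there is
   R in S with R included in the intersection of S' (empty intersection = W x W). *)
Definition down_directed (K : Type) {W : Type} (S : Rel W -> Prop) : Prop :=
  forall S' : Rel W -> Prop,
    (forall R, S' R -> S R) ->
    card_lt {R : Rel W | S' R} K ->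
    exists R, S R /\ forall x y, R x y -> forall R', S' R' -> R' x y.

Definition MKF (K : Type) (W : Type) (S : Rel W -> Prop) : Prop :=
  inhabited W /\ (exists R, S R) /\ down_directed K S.

Definition hom_MKF {W1 W2 : Type} (S1 : Rel W1 -> Prop) (S2 : Rel W2 -> Prop)
  (f : W1 -> W2) : Prop :=
  (forall x R2, S2 R2 -> exists R1, S1 R1 /\ forall y, R1 x y -> R2 (f x) (f y)) /\
  (forall x R1, S1 R1 -> exists R2, S2 R2 /\
      forall u, R2 (f x) u -> exists y, R1 x y /\ f y = u).

Definition iso_MKF {W1 W2 : Type} (S1 : Rel W1 -> Prop) (S2 : Rel W2 -> Prop)
  (f : W1 -> W2) : Prop := hom_MKF S1 S2 f /\ bij f.

Definition NFR (K : Type) (C : Type) (nu : C -> (C -> Prop) -> Prop) : Prop :=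
  inhabited C /\
  (forall c, nu c (fun _ => True)) /\
  (forall c (X Y : C -> Prop), nu c X -> (forall z, X z -> Y z) -> nu c Y) /\
  (forall c (S' : (C -> Prop) -> Prop),
      (forall X, S' X -> nu c X) -> (exists X, S' X) ->
      card_lt {X : C -> Prop | S' X} K ->
      nu c (fun z => forall X, S' X -> X z)).

Definition hom_NFR {C1 C2 : Type} (nu1 : C1 -> (C1 -> Prop) -> Prop)
  (nu2 : C2 -> (C2 -> Prop) -> Prop) (f : C1 -> C2) : Prop :=
  forall c (X : C2 -> Prop), nu1 c (fun z => X (f z)) <-> nu2 (f c) X.

Definition iso_NFR {C1 C2 : Type} (nu1 : C1 -> (C1 -> Prop) -> Prop)
  (nu2 : C2 -> (C2 -> Prop) -> Prop) (f : C1 -> C2) : Prop :=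
  hom_NFR nu1 nu2 f /\ bij f.

Definition N_nu {W : Type} (S : Rel W -> Prop) : W -> (W -> Prop) -> Prop :=
  fun x Y => exists R, S R /\ forall y, R x y -> Y y.

Definition H_S {C : Type} (nu : C -> (C -> Prop) -> Prop) : Rel C -> Prop :=
  fun R => exists v : C -> C -> Prop, (forall x, nu x (v x)) /\ R = (fun x y => v x y).

(* Main.v *)
Require Import Defs.
From Stdlib Require Import Classical ClassicalEpsilon.

Lemma surj_card_lt (A B K : Type) (p : A -> B) :
  (forall b, exists a, p a = b) -> card_lt A K -> card_lt B K.
Proof.
  intros Hs [[f Hf] Hn].
  assert (Hsec : exists s : B -> A, forall b, p (s b) = b).
  { exists (fun b => proj1_sig (constructive_indefinite_description _ (Hs b))).
    intro b. exact (proj2_sig (constructive_indefinite_description _ (Hs b))). }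
  destruct Hsec as [s Hsp].
  split.
  - exists (fun b => f (s b)). intros a b H. apply Hf in H.
    rewrite <- (Hsp a), <- (Hsp b), H. reflexivity.
  - intros [g Hg]. apply Hn. exists (fun k => s (g k)).
    intros a b H. apply Hg. rewrite <- (Hsp (g a)), <- (Hsp (g b)), H. reflexivity.
Qed.

Theorem theorem6p4 : forall K : Type,
  (* N and H are well-defined functors (N(f) = f, H(f) = f) *)
  (forall (W : Type) (S : Rel W -> Prop), MKF K W S -> NFR K W (N_nu S)) /\
  (forall (C : Type) (nu : C -> (C -> Prop) -> Prop), NFR K C nu -> MKF K C (H_S nu)) /\
  (forall (W1 : Type) (S1 : Rel W1 -> Prop) (W2 : Type) (S2 : Rel W2 -> Prop)
          (f : W1 -> W2),
      MKF K W1 S1 -> MKF K W2 S2 -> hom_MKF S1 S2 f -> hom_NFR (N_nu S1) (N_nu S2) f) /\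
  (forall (C1 : Type) (nu1 : C1 -> (C1 -> Prop) -> Prop)
          (C2 : Type) (nu2 : C2 -> (C2 -> Prop) -> Prop) (f : C1 -> C2),
      NFR K C1 nu1 -> NFR K C2 nu2 -> hom_NFR nu1 nu2 f -> hom_MKF (H_S nu1) (H_S nu2) f) /\
  (* the identity is an isomorphism M -> H(N(M)) *)
  (forall (W : Type) (S : Rel W -> Prop),
      MKF K W S -> iso_MKF S (H_S (N_nu S)) (fun x : W => x)) /\
  (* the identity is an isomorphism Z -> N(H(Z)) *)
  (forall (C : Type) (nu : C -> (C -> Prop) -> Prop),
      NFR K C nu -> iso_NFR nu (N_nu (H_S nu)) (fun x : C => x)).
Proof.
  intro K. split; [|split; [|split; [|split; [|split]]]].
  -
    intros W S [Hi [[R0 HR0] Hdd]].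
    split; [exact Hi|split; [|split]].
    + intro c. exists R0. split; auto.
    + intros c X Y [R [HR HX]] HXY. exists R. split; auto.
    + intros c S' HS' _ Hcard.
      set (P := fun X (R : Rel W) => S R /\ forall y, R c y -> X y).
      set (ch := fun X => epsilon (inhabits R0) (P X)).
      assert (Hch : forall X, S' X -> P X (ch X)).
      { intros X HX. unfold ch. apply epsilon_spec. destruct (HS' X HX) as [R HR].
        exists R. exact HR. }
      set (S'' := fun R => exists X, S' X /\ R = ch X).
      destruct (Hdd S'') as [R [HR HRsub]].
      * intros R [X [HX ->]]. apply (Hch X HX).
      * apply (surj_card_lt _ _ _ (fun x : {X | S' X} =>
                 exist S'' (ch (proj1_sig x)) (ex_intro _ (proj1_sig x) (conj (proj2_sig x) eq_refl))))
          ; [|exact Hcard].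
        intros [R [X [HX HRX]]]. exists (exist _ X HX). simpl.
        subst R. reflexivity.
      * exists R. split; [exact HR|]. intros y Hy X HX.
        apply (proj2 (Hch X HX)). apply (HRsub c y Hy (ch X)). exists X. auto.
  -
    intros C nu [Hi [HT [Hup Hint]]].
    split; [exact Hi|split].
    + exists (fun x y => True). exists (fun x y => True). split; auto.
    + intros S' HS' Hcard.
      exists (fun x y => forall R', S' R' -> R' x y). split; [|auto].
      exists (fun x y => forall R', S' R' -> R' x y). split; [|reflexivity].
      intro x.
      destruct (classic (exists R, S' R)) as [[R1 HR1]|Hne].
      * set (Sx := fun X : C -> Prop => exists R', S' R' /\ X = R' x).
        apply (Hup x (fun z => forall X, Sx X -> X z)).
        -- apply Hint.
           ++ intros X [R' [HR' ->]]. destruct (HS' R' HR') as [v [Hv ->]]. apply Hv.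
           ++ exists (R1 x). exists R1. auto.
           ++ apply (surj_card_lt _ _ _ (fun r : {R | S' R} =>
                 exist Sx (proj1_sig r x) (ex_intro _ (proj1_sig r) (conj (proj2_sig r) eq_refl))))
               ; [|exact Hcard].
              intros [X [R' [HR' HX]]]. exists (exist _ R' HR'). simpl. subst X. reflexivity.
        -- intros z Hz R' HR'. apply Hz. exists R'. auto.
      * apply (Hup x (fun _ => True)); [apply HT|].
        intros z _ R' HR'. exfalso. apply Hne. eauto.
  -
    intros W1 S1 W2 S2 f _ _ [Hi Hii] c X. split.
    + intros [R1 [HR1 HX]]. destruct (Hii c R1 HR1) as [R2 [HR2 H2]].
      exists R2. split; auto. intros u Hu. destruct (H2 u Hu) as [y [Hy <-]]. auto.
    + intros [R2 [HR2 HX]]. destruct (Hi c R2 HR2) as [R1 [HR1 H1]].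
      exists R1. split; auto.
  -
    intros C1 nu1 C2 nu2 f [_ [_ [Hup1 _]]] [_ [HT2 [Hup2 _]]] Hf. split.
    + intros x R2 [w [Hw ->]].
      exists (fun z y => w (f z) (f y)). split.
      * exists (fun z y => w (f z) (f y)). split; [|reflexivity].
        intro z. apply (proj2 (Hf z (w (f z)))). apply Hw.
      * auto.
    + intros x R1 [v [Hv ->]].
      set (w := fun u t => u = f x -> exists y, v x y /\ f y = t).
      exists (fun u t => w u t). split.
      * exists w. split; [|reflexivity]. intro u.
        destruct (classic (u = f x)) as [->|Hne].
        -- apply (Hup2 _ (fun t => exists y, v x y /\ f y = t)).
           ++ apply (proj1 (Hf x _)). apply (Hup1 x (v x)); [apply Hv|].
              intros z Hz. exists z. auto.
           ++ intros t Ht _. exact Ht.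
        -- apply (Hup2 _ (fun _ => True)); [apply HT2|].
           intros t _ Heq. contradiction.
      * intros u Hu. apply (Hu eq_refl).
  -
    intros W S _. split; [split|].
    + intros x R2 [w [Hw ->]]. destruct (Hw x) as [R [HR HRw]].
      exists R. split; auto.
    + intros x R1 HR1. exists (fun x y => R1 x y). split.
      * exists R1. split; [|reflexivity]. intro z. exists R1. auto.
      * intros u Hu. exists u. auto.
    + split; [intros a b H; exact H | intro b; exists b; reflexivity].
  -
    intros C nu [_ [HT [Hup _]]]. split.
    + intros c X. simpl. split.
      * intro HX. exists (fun z y => z = c -> X y). split.
        -- exists (fun z y => z = c -> X y). split; [|reflexivity].
           intro z. destruct (classic (z = c)) as [->|Hne].
           ++ apply (Hup _ _ _ HX). auto.
           ++ apply (Hup _ (fun _ => True)); [apply HT|]. intros y _ E; contradiction.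
        -- intros y H. apply H. reflexivity.
      * intros [R [[v [Hv ->]] HX]]. apply (Hup _ (v c)); auto.
    + split; [intros a b H; exact H | intro b; exists b; reflexivity].
Qed.
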